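(* Let $f \colon \mathbb{R}^n \to \mathbb{R}$ and $g \colon \mathbb{R}^n \to \mathbb{R}^m$ be continuously differentiable, let $X \subseteq \mathbb{R}^m$ be nonempty and closed, let $\rho>0$, and let $p^\rho(y) = \sum_{i=1}^n p_i^\rho(y_i)$ where each $p_i^\rho\colon\mathbb{R}\to\mathbb{R}$ satisfies (P.1)–(P.3) below with unique minimizer $s_i^\rho>0$. Let $x^*$ be a local minimizer of $$\text{(SPO)}\qquad \min_x\ f(x) + \rho\|x\|_0 \quad \text{s.t. } g(x)\in X,$$ and define $y^*\in\mathbb{R}^n$ by $y_i^* = s_i^\rho$ if $x_i^*=0$ and $y_i^*=0$ otherwise (so that $(x^*,y^* )$ is a local minimizer of (SPOref) below). Let $I_0(x^* ) = \{i : x_i^*=0\}$ and let $P \in \mathbb{R}^{|I_0(x^* )|\times n}$ be the matrix whose rows are $e_i^T$, $i\in I_0(x^* )$. Then the following are equivalent: (a) there exists $\alpha^*>0$ such that for every $\alpha\ge\alpha^*$, $x^*$ is a local minimizer of $f(x) + \alpha\|Px\|_1$ over the set $\{x : g(x)\in X\}$ (i.e. $f + \alpha\|P\cdot\|_1$ is an exact penalty function at $x^*$ for the tightened problem $\min f(x)$ s.t. $g(x)\in X$, $x_i = 0$ for all $i \in I_0(x^* )$); (b) there exists $\alpha^*>0$ such that for every $\alpha\ge\alpha^*$, $(x^*,y^* )$ is a local minimizer of $$\text{(Pen}(\alpha))\qquad \min_{x,y}\ f(x) + p^\rho(y) + \alpha |x|^T y \quad\text{s.t. } g(x)\in X,\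 y\ge 0$$ (i.e. Pen$(\alpha)$ is an exact penalty function at $(x^*,y^* )$ for the problem (SPOref): $\min_{x,y} f(x)+p^\rho(y)$ s.t. $g(x)\in X$, $x\circ y = 0$, $y\ge 0$).
   Context: $\|x\|_0$ is the number of nonzero components of $x$; $|x| = (|x_1|,\dots,|x_n|)^T$; $\circ$ is the componentwise product; $e_i$ is the $i$-th unit vector. Conditions on each $p_i^\rho$: (P.1) $p_i^\rho$ is convex and attains a unique minimum at some point $s_i^\rho>0$; (P.2) $p_i^\rho(0) - p_i^\rho(s_i^\rho) = \rho$; (P.3) $p_i^\rho$ is continuously differentiable. *)

(* Defs.v *)
From HB Require Import structures.
From mathcomp Require Import all_boot all_order all_algebra.
From mathcomp Require Import all_classical all_reals all_analysis.
Set Implicit Arguments. Unset Strict Implicit. Unset Printing Implicit Defensive.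
Import Order.TTheory GRing.Theory Num.Theory.
Import numFieldNormedType.Exports.
Local Open Scope classical_set_scope.
Local Open Scope ring_scope.

Definition local_minimizer (T : topologicalType) (R : realType)
  (F : T -> R) (S : set T) (x0 : T) : Prop :=
  S x0 /\ (\forall x \near x0, S x -> F x0 <= F x).

(* continuously differentiable map between normed spaces of vectors:
   differentiable everywhere and each directional derivative
   x |-> ('d f x) v is continuous (equivalent, in finite dimension, to
   continuity of x |-> 'd f x). *)
Definition C1 (R : realType) (n m : nat) (f : 'rV[R]_n -> 'rV[R]_m) : Prop :=
  (forall x, differentiable f x) /\
  (forall v : 'rV[R]_n, continuous (fun x => ('d f x : 'rV[R]_n -> 'rV[R]_m) v)).

Definition C1_scalar (R : realType) (n : nat) (f : 'rV[R]_n -> R) : Prop :=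
  (forall x, differentiable f x) /\
  (forall v : 'rV[R]_n, continuous (fun x => ('d f x : 'rV[R]_n -> R) v)).

Definition norm0 (R : realType) (n : nat) (x : 'rV[R]_n) : nat :=
  #|[set i : 'I_n | x 0 i != 0]|.

Definition norm1c (R : realType) (k : nat) (v : 'cV[R]_k) : R :=
  \sum_(j < k) `|v j 0|.

Definition I0 (R : realType) (n : nat) (x : 'rV[R]_n) : {set 'I_n} :=
  [set i : 'I_n | x 0 i == 0].

(* P : the |I_0(x)| x n matrix whose rows are e_i^T, i in I_0(x)
   (listed in increasing order of i) *)
Definition Pmat (R : realType) (n : nat) (x : 'rV[R]_n) : 'M[R]_(#|I0 x|, n) :=
  \matrix_(k < #|I0 x|, j < n) (enum_val k == j)%:R.

Definition convexR (R : realType) (p : R -> R) : Prop :=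
  forall (x y t : R), 0 <= t -> t <= 1 ->
    p (t * x + (1 - t) * y) <= t * p x + (1 - t) * p y.

Definition P_conditions (R : realType) (rho : R) (p : R -> R) (s : R) : Prop :=
  [/\ convexR p, 0 < s, (forall t, t != s -> p s < p t),
      p 0 - p s = rho &
      (forall t, derivable p t 1) /\ continuous (derive1 p)].

(* Main.v *)
Require Import Defs.
From HB Require Import structures.
From mathcomp Require Import all_boot all_order all_algebra.
From mathcomp Require Import all_classical all_reals all_analysis.
From mathcomp Require Import ring lra.
Import Order.TTheory GRing.Theory Num.Theory.
Import numFieldNormedType.Exports.
Local Open Scope classical_set_scope.
Local Open Scope ring_scope.

Lemma le_sum_term (R:realType) n (F : 'I_n -> R) i : (forall j, 0 <= F j) -> F i <= \sum_j F j.
Proof. move=> h; rewrite (bigD1 i) //= lerDl sumr_ge0 // => j _. Qed.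

Lemma norm1cP (R : realType) n (xs x : 'rV[R]_n) :
  norm1c (Pmat xs *m x^T) = \sum_(i in I0 xs) `|x 0 i|.
Proof.
rewrite /norm1c (big_enum_val (fun i => `|x 0 i|)); apply: eq_bigr => k _.
rewrite !mxE (bigD1 (enum_val k)) //= !mxE eqxx mul1r big1 ?addr0 // => j.
by rewrite !mxE eq_sym => /negbTE ->; rewrite mul0r.
Qed.

Lemma convex_slope (R : realType) (p : R -> R) y : convexR p -> 0 <= y ->
  y * (p 0 - p (-1)) <= p y - p 0.
Proof.
move=> cv y0; have := cv (-1) y (y / (1 + y)).
have h1 : 0 < 1 + y by lra.
have -> : y / (1 + y) * -1 + (1 - y / (1 + y)) * y = 0 by field; lra.
have t0 : 0 <= y / (1 + y) by rewrite divr_ge0 // ltW.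
have t1 : y / (1 + y) <= 1 by rewrite ler_pdivrMr // mul1r lerDr ler01.
move=> /(_ t0 t1).
have -> : 1 - y / (1 + y) = (1 + y)^-1 by field; lra.
move=> h.
have : (1 + y) * p 0 <= y * p (-1) + p y.
  have := ler_wpM2l (ltW h1) h.
  have -> : (1 + y) * (y / (1 + y) * p (-1) + (1 + y)^-1 * p y) = y * p (-1) + p y by field; lra.
  done.
lra.
Qed.

Lemma test (R : realType) n (xs ys : 'rV[R]_n) (P : 'rV[R]_n -> Prop) :
  (\forall x \near xs, P x) -> \forall xy \near (xs, ys), P xy.1.
Proof. move=> h. exact: cvg_fst h. Qed.

Lemma test3 (R : realType) n (xs ys : 'rV[R]_n) (P : 'rV[R]_n -> Prop) :
  (\forall y \near ys, P y) -> \forall xy \near (xs, ys), P xy.2.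
Proof. move=> h. exact: cvg_snd h. Qed.

Lemma test2 (R : realType) n (xs ys : 'rV[R]_n) (P : 'rV[R]_n * 'rV[R]_n -> Prop) :
  (\forall xy \near (xs, ys), P xy) -> \forall x \near xs, P (x, ys).
Proof. case=> [[A B] /= [hA hB] hAB]. apply: filterS hA => x Ax.
by apply: (hAB (x, ys)); split => //; exact: nbhs_singleton hB. Qed.

Lemma near_coord (R : realType) n (a : 'rV[R]_n) i (e : R) : 0 < e ->
  \forall x \near a, `|a 0 i - (x : 'rV[R]_n) 0 i| < e :> R.
Proof. move=> e0.
have := @cvgr_dist_lt _ R^o _ (nbhs a) _ (fun M : 'rV[R]_n => M 0 i) (a 0 i) (@coord_continuous R 1 n 0 i a) e e0.
move=> h; exact: h. Qed.

Theorem mainTheorem2 (R : realType) (n m : nat)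
  (f : 'rV[R]_n -> R) (g : 'rV[R]_n -> 'rV[R]_m) (X : set 'rV[R]_m)
  (rho : R) (p : 'I_n -> R -> R) (s : 'I_n -> R) (xs : 'rV[R]_n) :
  C1_scalar f -> C1 g ->
  X !=set0 -> closed X ->
  0 < rho ->
  (forall i, P_conditions rho (p i) (s i)) ->
  local_minimizer (fun x => f x + rho * (norm0 x)%:R) [set x | X (g x)] xs ->
  let ys : 'rV[R]_n := \row_i (if xs 0 i == 0 then s i else 0) in
  (exists2 alpha0 : R, 0 < alpha0 & forall alpha : R, alpha0 <= alpha ->
     local_minimizer (fun x => f x + alpha * norm1c (Pmat xs *m x^T))
       [set x | X (g x)] xs)
  <->
  (exists2 alpha0 : R, 0 < alpha0 & forall alpha : R, alpha0 <= alpha ->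
     local_minimizer
       (fun xy : 'rV[R]_n * 'rV[R]_n =>
          f xy.1 + \sum_(i < n) p i (xy.2 0 i)
          + alpha * \sum_(i < n) `|xy.1 0 i| * xy.2 0 i)
       [set xy : 'rV[R]_n * 'rV[R]_n | X (g xy.1) /\ forall i, 0 <= xy.2 0 i]
       (xs, ys)).
Proof.
move=> _ _ _ _ _ HP _ ys.
have spos i : 0 < s i by case: (HP i).
have ys0 : \sum_(i < n) `|xs 0 i| * ys 0 i = 0.
  by apply: big1 => i _; rewrite mxE; case: eqP => [->|_]; rewrite ?normr0 ?mul0r ?mulr0.
have Pxs0 : norm1c (Pmat xs *m xs^T) = 0.
  by rewrite norm1cP; apply: big1 => i; rewrite inE => /eqP ->; rewrite normr0.
split.
- case=> a0 a0pos Ha.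
  pose L i := p i 0 - p i (-1).
  pose K := \sum_i (2 * `|L i| / `|xs 0 i|).
  pose c0 := (1 + \sum_i (s i)^-1)^-1.
  have Sinv0 : 0 <= \sum_i (s i)^-1 by apply: sumr_ge0 => i _; rewrite invr_ge0 ltW.
  have c0pos : 0 < c0 by rewrite invr_gt0; lra.
  have c0s i : c0 < s i.
    have sip j : 0 <= (s j)^-1 by rewrite invr_ge0 ltW.
    have := @le_sum_term _ _ (fun j => (s j)^-1) i sip.
    rewrite -[s i]invrK ltf_pV2 ?posrE ?invr_gt0 //=; try lra.
  have K0 : 0 <= K by apply: sumr_ge0 => i _; rewrite divr_ge0 // mulr_ge0.
  exists (a0 / c0 + K); first by rewrite ltr_wpDr // divr_gt0.
  move=> al hal.
  have al0 : 0 <= al.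
    apply: le_trans hal; rewrite addr_ge0 // ltW // divr_gt0 //.
  have hac : a0 <= al * c0.
    by rewrite -ler_pdivrMr //; apply: le_trans hal; rewrite lerDl.
  have [Sxs Hloc] := Ha _ hac.
  split.
    split; first exact: Sxs.
    by move=> i; rewrite mxE; case: ifP => _ //; exact: ltW.
  have H1 := @test _ _ xs ys _ Hloc.
  have H2 : \forall xy \near (xs, ys), forall i : 'I_n,
      (xs 0 i == 0 -> c0 < (xy : 'rV[R]_n * 'rV[R]_n).2 0 i) /\ (xs 0 i != 0 -> `|xs 0 i| / 2 < `|xy.1 0 i|).
    apply: (@filter_forall _ _ _ (nbhs (xs, ys)) _) => i.
    have [xi0|xin0] := eqVneq (xs 0 i) 0.
      have h : \forall y \near ys, c0 < (y : 'rV[R]_n) 0 i.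
        have := @near_coord _ _ ys i (s i - c0); rewrite subr_gt0 => /(_ (c0s i)).
        apply: filterS => y; rewrite mxE xi0 eqxx => h.
        have := ler_norm (s i - y 0 i); lra.
      have := @test3 _ _ xs ys _ h.
      by apply: filterS => xy hy; split => //; rewrite xi0 eqxx.
    have h : \forall x \near xs, `|xs 0 i| / 2 < `|(x : 'rV[R]_n) 0 i|.
      have := @near_coord _ _ xs i (`|xs 0 i| / 2).
      rewrite divr_gt0 ?normr_gt0 // => /(_ isT).
      apply: filterS => x h.
      have := ler_normD (xs 0 i - x 0 i) (x 0 i); rewrite subrK; lra.
    have := @test _ _ xs ys _ h.
    by apply: filterS => xy hy; split => // /eqP; rewrite (negbTE xin0).
  have hK i : 2 * `|L i| / `|xs 0 i| <= al.
    apply: le_trans hal; rewrite -[X in X <= _]add0r; apply: lerD; first by rewrite divr_ge0 // ltW.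
    apply: (@le_sum_term _ _ (fun j => 2 * `|L j| / `|xs 0 j|)) => j.
    by rewrite divr_ge0 // mulr_ge0.
  apply: filterS2 H1 H2 => -[x y] /= h1 h2 [/= Sx ypos].
  have {h1} := h1 Sx; rewrite Pxs0 mulr0 addr0 norm1cP => h1.
  rewrite ys0 mulr0 addr0.
  suff key : al * c0 * \sum_(i in I0 xs) `|x 0 i| + \sum_(i < n) p i (ys 0 i)
      <= \sum_(i < n) p i (y 0 i) + al * \sum_(i < n) `|x 0 i| * y 0 i.
    move: h1 key; set A := al * c0 * _; set B := \sum_(i < n) p i (ys 0 i);
      set C := \sum_(i < n) p i (y 0 i); set D := al * _; lra.
  rewrite mulr_sumr big_mkcond -big_split /= mulr_sumr -big_split /=.
  apply: ler_sum => i _; rewrite inE mxE.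
  case: (HP i) => cv _ Hmin _ _.
  have x0 := normr_ge0 (x 0 i).
  have [xi0|xin0] := eqVneq (xs 0 i) 0.
    have [hy _] := h2 i; have {hy} := hy (introT eqP xi0) => hy.
    have hp : p i (s i) <= p i (y 0 i).
      have [->|ne] := eqVneq (y 0 i) (s i); first exact: le_refl.
      by apply: ltW; apply: Hmin.
    have hy' : 0 <= y 0 i - c0 by rewrite subr_ge0 ltW.
    have := mulr_ge0 (mulr_ge0 al0 x0) hy'.
    have e : al * (`|x 0 i| * y 0 i) = al * `|x 0 i| * y 0 i by rewrite mulrA.
    rewrite e; set u := al * `|x 0 i|.
    have e2 : al * c0 * `|x 0 i| = u * c0 by rewrite /u; ring.
    rewrite e2; nra.
  have [_ /(_ xin0) hx] := h2 i.
  have hxs : 0 < `|xs 0 i| by rewrite normr_gt0.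
  have hk := hK i; rewrite ler_pdivrMr // in hk.
  have e3 : al * (`|xs 0 i| / 2) <= al * `|x 0 i| by rewrite ler_wpM2l // ltW.
  have e4 : al * (`|xs 0 i| / 2) = al * `|xs 0 i| / 2 by rewrite mulrA.
  have hL := ler_norm (- L i); rewrite normrN in hL.
  have hLx : 0 <= L i + al * `|x 0 i| by lra.
  have := mulr_ge0 (ypos i) hLx.
  have := @convex_slope _ (p i) (y 0 i) cv (ypos i); rewrite -/(L i) add0r.
  have e5 : al * (`|x 0 i| * y 0 i) = y 0 i * (al * `|x 0 i|) by ring.
  move=> hc hm; rewrite mulrDr in hm; rewrite e5.
  move: hc hm; set v := y 0 i * (al * `|x 0 i|); set w := y 0 i * L i.
  lra.
- case=> a0 a0pos Hb.
  pose S := 1 + \sum_i s i.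
  have S0 : 0 <= \sum_i s i by apply: sumr_ge0 => i _; rewrite ltW.
  have Spos : 0 < S by rewrite /S; lra.
  exists (a0 * S); first by rewrite mulr_gt0.
  move=> al hal.
  have hb : a0 <= al / S by rewrite ler_pdivlMr.
  have al0 : 0 <= al by apply: le_trans hal; rewrite mulr_ge0 // ltW.
  have [[Sxs _] Hloc] := Hb _ hb.
  split => //.
  have := @test2 _ _ xs ys _ Hloc.
  apply: filterS => x H Sx.
  have yspos : forall i, 0 <= ys 0 i by move=> i; rewrite mxE; case: ifP => _ //; exact: ltW.
  have := H (conj Sx yspos); rewrite /= ys0 mulr0 addr0 Pxs0 mulr0 addr0 norm1cP.
  move=> h; rewrite -(lerD2r (\sum_(i < n) p i (ys 0 i))); apply: le_trans h _.
  rewrite [X in _ <= X]addrAC lerD2l.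
  rewrite !mulr_sumr [X in _ <= X]big_mkcond /=; apply: ler_sum => i _.
  rewrite mxE inE; case: ifP => _; last by rewrite mulr0 mulr0.
  have hs : s i <= S by have := @le_sum_term _ _ s i (fun j => ltW (spos j)); rewrite /S; lra.
  have hS : al = al / S * S by rewrite divfK // gt_eqF.
  rewrite [X in _ <= X * _]hS.
  have t0 : 0 <= al / S by rewrite divr_ge0 // ltW.
  have x0 := normr_ge0 (x 0 i).
  have hs' : 0 <= S - s i by rewrite subr_ge0.
  have := mulr_ge0 (mulr_ge0 t0 x0) hs'.
  set t := al / S; set u := `|x 0 i|; move=> h3; nra.
Qed.
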